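(* Let $p$ be a prime and let $G$ be a finite subgroup of $\mathrm{M}(p,\mathbb{C})$ whose permutation part $\phi(G)$ is transitive. If $\mathrm{D}(p,\mathbb{C})\cap G$ is not contained in the group of scalar matrices, then $G$ is irreducible. Conversely, if $G$ is solvable and irreducible, then $\mathrm{D}(p,\mathbb{C})\cap G$ is not contained in the group of scalar matrices.
   Context: $\mathrm{M}(p,\mathbb{C})$ is the group of monomial matrices in $\mathrm{GL}(p,\mathbb{C})$, equal to $\mathrm{D}(p,\mathbb{C})\rtimes \mathrm{P}(p)$ with $\mathrm{D}(p,\mathbb{C})$ the invertible diagonal matrices and $\mathrm{P}(p)\cong\mathrm{Sym}(p)$ the permutation matrices (via $\alpha\mapsto[\delta_{i\alpha,j}]_{i,j}$). The map $\phi\colon \mathrm{M}(p,\mathbb{C})\to\mathrm{Sym}(p)$ sends $dt\mapsto t$; $\phi(G)$ is the permutation part of $G$. *)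

(* Defs.v *)
From HB Require Import structures.
From mathcomp Require Import all_boot all_order all_algebra all_fingroup all_solvable.
From mathcomp Require Import mxrepresentation.
From mathcomp Require Import complex.
From mathcomp Require Import Rstruct.
Set Implicit Arguments. Unset Strict Implicit. Unset Printing Implicit Defensive.
Import GRing.Theory Num.Theory.
Local Open Scope ring_scope.

(* The field of complex numbers: C = R[i] with R the (Stdlib) real numbers,
   which is a real closed field (realType), so complex R is algebraically closed. *)
Definition Cfield : numClosedFieldType := complex Rdefinitions.R.

(* M is the monomial matrix d t with d = diag_mx dv invertible diagonal and
   t = perm_mx s the permutation matrix [delta_{i s, j}]_{i,j}.
   Its permutation part phi(M) is s. *)
Definition monomial_decomp (F : fieldType) (n : nat) (M : 'M[F]_n)
    (dv : 'rV[F]_n) (s : 'S_n) : Prop :=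
  (forall i, dv 0 i != 0) /\ M = diag_mx dv *m perm_mx s.

Definition is_monomial (F : fieldType) (n : nat) (M : 'M[F]_n) : Prop :=
  exists dv s, monomial_decomp M dv s.

Definition perm_part_transitive (F : fieldType) (gT : finGroupType)
    (G : {group gT}) (n : nat) (rG : mx_representation F G n) : Prop :=
  forall i j : 'I_n, exists x, x \in G /\
    exists dv s, monomial_decomp (rG x) dv s /\ s i = j.

Definition diag_part_nonscalar (F : fieldType) (gT : finGroupType)
    (G : {group gT}) (n : nat) (rG : mx_representation F G n) : Prop :=
  exists x, x \in G /\ is_diag_mx (rG x) /\ ~ is_scalar_mx (rG x).

(* Main.v *)
Require Import Defs.
From HB Require Import structures.
From mathcomp Require Import all_boot all_order all_algebra all_fingroup all_solvable.
From mathcomp Require Import mxrepresentation.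
Set Implicit Arguments. Unset Strict Implicit. Unset Printing Implicit Defensive.
Import GRing.Theory.

Section Mono.
Local Open Scope ring_scope.
Variables (F : fieldType) (p : nat) (gT : finGroupType) (G : {group gT}).
Variable (rG : mx_representation F G p).
Hypothesis monoG : forall x, x \in G -> is_monomial (rG x).

Definition pat (M : 'M[F]_p) (s : 'S_p) :=
  [forall i, forall j, (M i j != 0) == (s i == j)].

Lemma decomp_pat M dv s : monomial_decomp M dv s -> pat M s.
Proof.
case=> nz ->; apply/forallP=> i; apply/forallP=> j.
rewrite mul_diag_mx perm_mxEsub !mxE.
by case: (s i == j); rewrite ?mulr1 ?mulr0 ?nz ?eqxx.
Qed.

Lemma pat_uniq M s t : pat M s -> pat M t -> s = t.
Proof.
move=> /forallP Ps /forallP Pt; apply/permP=> i.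
have /eqP := forallP (Ps i) (s i); rewrite eqxx => nz.
by have /eqP := forallP (Pt i) (s i); rewrite nz => /esym/eqP.
Qed.

Definition phi x : 'S_p := odflt 1%g [pick s | pat (rG x) s].

Lemma phiP x : x \in G -> pat (rG x) (phi x).
Proof.
move=> Gx; rewrite /phi; case: pickP => [s //|].
by case: (monoG Gx) => dv [s D] /(_ s); rewrite (decomp_pat D).
Qed.

Lemma phi_decomp x dv s : x \in G -> monomial_decomp (rG x) dv s -> phi x = s.
Proof. by move=> Gx D; apply: pat_uniq (phiP Gx) (decomp_pat D). Qed.

Lemma patE M s i j : pat M s -> (M i j != 0) = (s i == j).
Proof. by move=> /forallP/(_ i)/forallP/(_ j)/eqP. Qed.

Lemma rG_nz x i : x \in G -> rG x i (phi x i) != 0.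
Proof. by move=> Gx; rewrite (patE _ _ (phiP Gx)). Qed.

Lemma rG_entry x i j : x \in G -> rG x i j = rG x i (phi x i) * (phi x i == j)%:R.
Proof.
move=> Gx; case: eqP => [-> | /eqP ne]; first by rewrite mulr1.
by apply/eqP; rewrite mulr0 -[_ == 0]negbK (patE _ _ (phiP Gx)) (negbTE ne).
Qed.

Lemma mono_mulmx x (A : 'M[F]_p) i j : x \in G ->
  (rG x *m A) i j = rG x i (phi x i) * A (phi x i) j.
Proof.
move=> Gx; rewrite mxE (bigD1 (phi x i)) //= big1 ?addr0.
  by rewrite {1}(rG_entry _ _ Gx) eqxx mulr1.
by move=> k nk; rewrite (rG_entry _ _ Gx) eq_sym (negbTE nk) mulr0 mul0r.
Qed.

Lemma phiM : {in G &, {morph phi : x y / (x * y)%g}}.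
Proof.
move=> x y Gx Gy; apply: pat_uniq (phiP (groupM Gx Gy)) _.
apply/forallP=> i; apply/forallP=> j.
rewrite repr_mxM // mono_mulmx // mulf_eq0 negb_or (rG_nz _ Gx) /=.
by rewrite (patE _ _ (phiP Gy)) permM.
Qed.

Canonical phim := Morphism phiM.

Lemma diag_phi x : x \in G -> is_diag_mx (rG x) = (phi x == 1%g).
Proof.
move=> Gx; apply/is_diag_mxP/eqP => [D | E].
  apply/permP=> i; rewrite perm1; apply/eqP; apply: contraT => ne; idtac.
  have := rG_nz i Gx; rewrite D ?eqxx //; by rewrite eq_sym.
by move=> i j ne; rewrite (rG_entry _ _ Gx) E perm1 eqE /= (negbTE ne) mulr0.
Qed.

Lemma diag_mulmx (D A : 'M[F]_p) i j : is_diag_mx D -> (D *m A) i j = D i i * A i j.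
Proof.
move=> /is_diag_mxP dD; rewrite mxE (bigD1 i) //= big1 ?addr0 //.
by move=> k nk; rewrite dD ?mul0r // eq_sym.
Qed.

End Mono.
Lemma prime_block (p : nat) (rT : eqType) (f : 'I_p -> rT) (good : {perm 'I_p} -> Prop) :
  prime p ->
  (forall i j, exists s, good s /\ s i = j) ->
  (forall s, good s -> forall i j, f i = f j -> f (s i) = f (s j)) ->
  injective f \/ (forall i j, f i = f j).
Proof.
move=> pr tr inv.
pose C i := [set j | f j == f i].
have leC i j : #|C i| <= #|C j|.
  have [s [gs sij]] := tr i j.
  rewrite -sij -(card_imset _ (@perm_inj _ s)); apply: subset_leq_card.
  apply/subsetP => y /imsetP[k]; rewrite inE => /eqP fk ->.
  by rewrite inE (inv s gs _ _ fk).
have eqC i j : #|C i| = #|C j| by apply/eqP; rewrite eqn_leq !leC.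
have p0 : 0 < p := prime_gt0 pr.
pose i0 := Ordinal p0.
have dv: #|C i0| %| p.
  rewrite -[X in _ %| X]card_ord -cardsT (card_partition (preim_partitionP f [set: 'I_p])).
  rewrite (eq_bigr (fun _ => #|C i0|)) ?sum_nat_const ?dvdn_mull //.
  move=> A /imsetP[x _ ->]; rewrite -(eqC x); apply: eq_card => y.
  by rewrite !inE eq_sym.
have [_ /(_ _ dv) /orP[] /eqP Ci0] := primeP pr.
  left=> i j fij; have := eqC i i0; rewrite Ci0 => /eqP /cards1P [x Cx].
  have : i \in C i by rewrite inE.
  have : j \in C i by rewrite inE fij.
  by rewrite Cx !inE => /eqP -> /eqP ->.
right=> i j; have CT : C i0 = setT.
  by apply/eqP; rewrite eqEcard subsetT cardsT card_ord Ci0 leqnn.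
have : i \in C i0 by rewrite CT inE.
have : j \in C i0 by rewrite CT inE.
by rewrite !inE => /eqP -> /eqP ->.
Qed.

Section Part1.
Local Open Scope ring_scope.
Variables (F : fieldType) (p : nat) (gT : finGroupType) (G : {group gT}).
Variable (rG : mx_representation F G p).
Hypothesis monoG : forall x, x \in G -> is_monomial (rG x).
Local Notation phi := (phi rG).

Lemma mulmx_diag m (A : 'M[F]_(m, p)) (D : 'M[F]_p) i j :
  is_diag_mx D -> (A *m D) i j = A i j * D j j.
Proof.
move=> /is_diag_mxP dD; rewrite mxE (bigD1 j) //= big1 ?addr0 //.
by move=> k nk; rewrite dD ?mulr0.
Qed.

Lemma conj_diag y x : y \in G -> x \in G -> is_diag_mx (rG x) ->
  is_diag_mx (rG (y * x * y^-1)%g) /\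
  forall i, rG (y * x * y^-1)%g i i = rG x (phi y i) (phi y i).
Proof.
move=> Gy Gx dx; have Gx' : (y * x * y^-1)%g \in G by rewrite !groupM ?groupV.
have dx' : is_diag_mx (rG (y * x * y^-1)%g).
  rewrite (diag_phi monoG Gx') (diag_phi monoG Gx) in dx *.
  have := morphM (phim monoG) (groupM Gy Gx) (groupVr Gy).
  rewrite (morphM (phim monoG) Gy Gx) (morphV (phim monoG) Gy) /= => ->.
  by rewrite (eqP dx) mulg1 mulgV.
split=> // i.
have E : rG (y * x * y^-1)%g *m rG y = rG y *m rG x.
  by rewrite -!repr_mxM ?groupM ?groupV // -!mulgA mulVg mulg1.
have := congr1 (fun M : 'M[F]_p => M i (phi y i)) E.
rewrite diag_mulmx // (mono_mulmx monoG _ _ _ Gy) mulrC.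
by move/(mulfI (rG_nz monoG i Gy)).
Qed.

Lemma part1 : prime p -> perm_part_transitive rG -> diag_part_nonscalar rG ->
  mx_irreducible rG.
Proof.
move=> pr tr [a [Ga [da nsa]]].
pose f i := [ffun x => if (x \in G) && is_diag_mx (rG x) then rG x i i else 0].
have tr' : forall i j, exists s, (exists2 y, y \in G & phi y = s) /\ s i = j.
  move=> i j; have [y [Gy [dv [s [D sij]]]]] := tr i j.
  exists s; split=> //; exists y => //; exact: (phi_decomp monoG Gy D).
have inv : forall s, (exists2 y, y \in G & phi y = s) ->
    forall i j, f i = f j -> f (s i) = f (s j).
  move=> s [y Gy <-] i j fij; apply/ffunP=> x; rewrite !ffunE.
  case: ifP => // /andP[Gx dx].
  have Gx' : (y * x * y^-1)%g \in G by rewrite !groupM ?groupV.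
  have [dx' Ex'] := conj_diag Gy Gx dx.
  by have := congr1 (fun g : {ffun gT -> F} => g (y * x * y^-1)%g) fij; rewrite !ffunE Gx' dx' /= !Ex'.
have p0 : (0 < p)%N := prime_gt0 pr.
case: (prime_block pr tr' inv) => [finj | fconst]; last first.
  exfalso; apply: nsa; apply/is_scalar_mxP; exists (rG a (Ordinal p0) (Ordinal p0)).
  apply/matrixP => i j; rewrite mxE; case: (eqVneq i j) => [<-|ne].
    by have := congr1 (fun g : {ffun gT -> F} => g a) (fconst i (Ordinal p0)); rewrite !ffunE Ga da /= mulr1n.
  by rewrite (is_diag_mxP da) ?mulr0n.
have dist : forall i j, i != j -> exists x, [/\ x \in G, is_diag_mx (rG x) &
    rG x i i != rG x j j].
  move=> i j ne; case: (boolP [exists x, f i x != f j x]) => [/existsP[x] | none].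
    rewrite !ffunE; case: ifP => [/andP[Gx dx] nx | _]; last by rewrite eqxx.
    by exists x.
  case/negP: ne; apply/eqP/finj/ffunP => x; apply/eqP.
  by move: none; rewrite negb_exists => /forallP/(_ x); rewrite negbK.
apply/mx_irrP; split=> // U modU nzU.
have key : forall (n : nat) (v : 'rV[F]_p), leq #|[set k | v 0 k != 0]| n -> v != 0 ->
    (v <= U)%MS -> exists i, ((delta_mx 0 i : 'rV[F]_p) <= U)%MS.
  move=> n; elim: n => [|n IH] v le nz sU.
    case/negP: nz; apply/eqP; apply/rowP => k; rewrite mxE; apply/eqP; apply: contraT => vk.
    by move: le; rewrite leqn0 cards_eq0 => /eqP/setP/(_ k); rewrite !inE vk.
  have [i vi] : exists i, v 0 i != 0.
    case: (pickP (fun k => v 0 k != 0)) => [i vi | none]; first by exists i.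
    by case/negP: nz; apply/eqP; apply/rowP => k; rewrite mxE; apply/eqP; have := none k => /negbFE.
  case: (boolP [exists j, (j != i) && (v 0 j != 0)]) => [/existsP[j /andP[ji vj]] | none].
    have [x [Gx dx nx]] := dist j i ji.
    pose w := v *m rG x + (- rG x i i) *: v.
    have wE k : w 0 k = v 0 k * (rG x k k - rG x i i).
      rewrite /w [X in X = _]mxE mulmx_diag // [X in _ * _ + X = _]mxE.
      by rewrite mulrBr mulrC mulNr [v 0 k * _]mulrC.
    apply: (IH w).
    - have sub : [set k | w 0 k != 0] \subset [set k | v 0 k != 0] :\ i.
        apply/subsetP => k; rewrite !inE wE mulf_eq0 negb_or => /andP[vk xk].
        by rewrite vk andbT; apply: contraNneq xk => ->; rewrite subrr.
      move: le; rewrite (cardsD1 i) inE vi add1n ltnS; apply: leq_trans.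
      exact: subset_leq_card.
    - apply/eqP => /rowP/(_ j) /eqP; rewrite wE mxE mulf_eq0 subr_eq0.
      by rewrite (negbTE vj) (negbTE nx).
    - by apply: addmx_sub; [apply: mxmodule_trans | apply: scalemx_sub].
  exists i; have -> : (delta_mx 0 i : 'rV[F]_p) = (v 0 i)^-1 *: v.
    apply/rowP => k; rewrite !mxE eqxx /=; case: (eqVneq k i) => [->|ki].
      by rewrite mulVf.
    move: none; rewrite negb_exists => /forallP/(_ k); rewrite ki /= negbK => /eqP ->.
    by rewrite mulr0.
  exact: scalemx_sub.
have [i ei] : exists i, ((delta_mx 0 i : 'rV[F]_p) <= U)%MS.
  have [v nzv sv] : exists2 v : 'rV[F]_p, v != 0 & (v <= U)%MS.
    have [k] : exists k, row k U != 0.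
      case: (pickP (fun k => row k U != 0)) => [k vk | none]; first by exists k.
      by case/negP: nzU; apply/eqP/row_matrixP => k; rewrite row0; apply/eqP; have := none k => /negbFE.
    by exists (row k U) => //; apply: row_sub.
  by apply: (key p v) => //; apply: leq_trans (max_card _) _; rewrite card_ord.
rewrite -sub1mx; apply/row_subP => j; rewrite row1.
have [s [[y Gy <-] sij]] := tr' i j.
have ey : row i (rG y) = rG y i j *: (delta_mx 0 j : 'rV[F]_p).
  apply/rowP => k; rewrite !mxE (rG_entry monoG _ _ Gy) sij eqxx /=.
  by rewrite eq_sym.
have nz : rG y i j != 0 by rewrite -sij rG_nz.
have -> : (delta_mx 0 j : 'rV[F]_p) = (rG y i j)^-1 *: row i (rG y) by rewrite ey scalerA mulVf ?scale1r.
by apply: scalemx_sub; rewrite rowE; apply: mxmodule_trans.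
Qed.

End Part1.

Lemma p2_not_dvd_fact p : prime p -> ~~ (p * p %| p`!)%N.
Proof.
move=> pr; have p1 := prime_gt1 pr; have p0 := prime_gt0 pr.
rewrite -{3}(prednK p0) factS prednK // dvdn_pmul2l //.
apply/negP => dv; have := Wilson p1; rewrite pr => /esym.
by rewrite -addn1 dvdn_addr // dvdn1 => /eqP pe; rewrite pe in p1.
Qed.

Section GroupPart.
Local Open Scope group_scope.
Lemma solvable_prime_trans (p : nat) (Q : {group {perm 'I_p}}) :
  prime p -> solvable Q -> (forall i j, exists2 s, s \in Q & s i = j) ->
  exists M : {group {perm 'I_p}},
    [/\ M <| Q, #|M| = p, cyclic M & ~~ (p %| #|Q : M|)%N].
Proof.
move=> pr solQ tr.
have p0 := prime_gt0 pr; have p1 := prime_gt1 pr.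
pose i0 : 'I_p := Ordinal p0; pose i1 : 'I_p := Ordinal p1.
have ntQ : Q :!=: 1%g.
  have [s Qs si] := tr i0 i1; apply/trivgPn; exists s => //.
  by apply/eqP => s1; move: si; rewrite s1 perm1 => /(congr1 val).
have [M minM sMQ] := minnormal_exists ntQ (normG Q).
have [nMQ ntM abelM] := minnormal_solvable minM sMQ solQ.
have abM : abelian M by case/is_abelemP: abelM => q _ /abelem_abelian.
have nsMQ : M <| Q by rewrite /normal sMQ.
pose f i := orbit 'P M i.
have inv : forall s, s \in Q -> forall i j, f i = f j -> f (s i) = f (s j).
  move=> s Qs i j fij; have E k : f (s k) = setact 'P (f k) s.
    by rewrite /f setact_orbit (normP (subsetP nMQ s Qs)).
  by rewrite !E fij.
have tr' : forall i j, exists s, s \in Q /\ s i = j.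
  by move=> i j; have [s Qs sij] := tr i j; exists s.
have orbT : orbit 'P M i0 = setT.
  case: (prime_block pr tr' inv) => [finj | fconst].
    case/trivgPn: ntM => m Mm; apply: contraNeq => _.
    apply/eqP/permP => i; rewrite perm1; apply: finj; rewrite /f.
    have H : m i \in orbit 'P M i by rewrite -[m i]apermE mem_orbit.
    by apply/setP => k; rewrite orbit_sym (orbit_transl _ H) orbit_sym.
  apply/setP => i; rewrite inE; have : i \in f i by apply: orbit_refl.
  by rewrite (fconst i i0).
have stab1 : 'C_M[i0 | 'P] = 1%g.
  apply/trivgP/subsetP => m /setIP[Mm /astab1P] /=; rewrite apermE => mi0.
  rewrite inE; apply/eqP/permP => j; rewrite perm1.
  have : j \in orbit 'P M i0 by rewrite orbT inE.
  case/orbitP => m' Mm' <- /=; rewrite !apermE -permM.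
  by rewrite -(centsP abM m Mm m' Mm') permM mi0.
have oM : #|M| = p.
  by rewrite -[RHS]card_ord -cardsT -orbT card_orbit stab1 indexg1.
exists M; split => //; first by apply: prime_cyclic; rewrite oM.
have dQ : (#|Q| %| p`!)%N by rewrite -card_Sn -cardsT cardSg ?subsetT.
apply/negP => dv; apply: (negP (p2_not_dvd_fact pr)); apply: dvdn_trans dQ.
by rewrite -(Lagrange sMQ) oM dvdn_pmul2l.
Qed.

End GroupPart.

Section Part2.
Local Open Scope ring_scope.
Variables (F : closedFieldType) (p : nat) (gT : finGroupType) (G : {group gT}).
Variable (rG : mx_representation F G p).
Hypothesis monoG : forall x, x \in G -> is_monomial (rG x).
Local Notation phi := (phi rG).
Local Notation phim := (phim monoG).

Lemma part2 : prime p -> mx_faithful rG -> perm_part_transitive rG ->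
  solvable G -> mx_irreducible rG -> diag_part_nonscalar rG.
Proof.
move=> pr ff tr solG irrG.
case: (boolP [exists x in G, is_diag_mx (rG x) && ~~ is_scalar_mx (rG x)]) =>
  [/exists_inP[x Gx /andP[dx nsx]] | none].
  by exists x; split => //; split => //; apply/negP.
exfalso.
have H0 : forall x, x \in G -> phi x = 1%g -> is_scalar_mx (rG x).
  move=> x Gx px; move: none; rewrite negb_exists_in => /forall_inP/(_ x Gx).
  by rewrite (diag_phi monoG Gx) px eqxx /= negbK.
have central : forall z y, z \in G -> y \in G -> phi z = 1%g -> commute z y.
  move=> z y Gz Gy pz; have /is_scalar_mxP[c Ec] := H0 z Gz pz.
  apply: (mx_faithful_inj ff); rewrite ?groupM // !repr_mxM // Ec.
  by rewrite scalar_mxC.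
pose Q := (phim @* G)%G.
have trQ : forall i j, exists2 s, s \in Q & s i = j.
  move=> i j; have [y [Gy [dv [s [D sij]]]]] := tr i j; exists s => //.
  rewrite -(phi_decomp monoG Gy D); exact: (mem_morphim phim Gy Gy).
have [M [nsMQ oM cycM ndv]] := solvable_prime_trans pr (morphim_sol phim solG) trQ.
have sMQ := normal_sub nsMQ.
pose N := (phim @*^-1 M)%G.
have sNG : N \subset G by apply: subsetIl.
have nsNG : (N <| G)%g.
  have := morphpre_normal sMQ (subxx Q).
  by rewrite nsMQ morphimGK ?subsetIl.
have [m0 defM] := cyclicP cycM.
have Mm0 : m0 \in M by rewrite defM cycle_id.
case/morphimP: (subsetP sMQ m0 Mm0) => n0 Gn0 _ def_m0.
have Nn0 : n0 \in N by apply/morphpreP; rewrite -def_m0.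
have m0n1 : m0 != 1%g.
  apply/eqP => m01; move: oM; rewrite defM m01 cycle1 cards1 => p1.
  by rewrite -p1 in pr.
have decomp : forall x, x \in N ->
    exists2 z, z \in G /\ phi z = 1%g & exists k, x = (z * n0 ^+ k)%g.
  move=> x /morphpreP[Gx]; rewrite defM => /cycleP[k ek].
  exists (x * (n0 ^+ k)^-1)%g; last by exists k; rewrite mulgKV.
  split; first by rewrite groupM ?groupV ?groupX.
  have Gk := groupX k Gn0.
  have := morphM phim Gx (groupVr Gk).
  rewrite (morphV phim Gk) (morphX phim k Gn0) /= -def_m0 => ->.
  by rewrite ek mulgV.
have abN : abelian N.
  apply/centsP => x Nx y Ny.
  have [z [Gz pz] [k ->]] := decomp x Nx.
  have [z' [Gz' pz'] [k' ->]] := decomp y Ny.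
  have Gnk := groupX k Gn0; have Gnk' := groupX k' Gn0.
  apply: commuteM.
    by apply: commute_sym; apply: central => //; rewrite groupM.
  apply: commute_sym; apply: commuteM.
    by apply: commute_sym; apply: central.
  exact: commuteX2.
have eqidx : #|G : N|%g = #|Q : M|%g.
  have e1 : (#|N| * #|G : N|%g)%N = (#|N| * #|Q : M|%g)%N.
    rewrite (Lagrange sNG) card_morphpre // -mulnA (Lagrange sMQ).
    by rewrite card_morphim setIid Lagrange // subsetIl.
  by apply/eqP; rewrite -(eqn_pmul2l (cardG_gt0 N)) e1.
rewrite -eqidx in ndv.
pose rN := subg_repr rG (normal_sub nsNG).
suff C : forall sH : socleType rN, False.
  have : is_true false; last by [].
  by apply: (socle_exists rN) => sH; case: (C sH).
move=> sH.
have [W _ orbW] := imsetP (Clifford_atrans irrG sH).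
have rk := Clifford_rank_components irrG W.
have := dvdn_mulr (\rank W) (dvdnn #|sH|); rewrite rk.
case/primeP: (pr) => _ /[apply] /orP[] /eqP cH.
  rewrite cH mul1n in rk.
  have simM := socle_simple W.
  have rk1 := mxsimple_abelian_linear (@group_closure_closed_field F gT N) abN simM.
  have [modM _ _] := simM.
  have [u [a defu ua]] := mxmodule_eigenvector modM rk1.
  have Wfull : (1%:M <= (W : 'M_p))%MS by rewrite sub1mx /row_full rk.
  pose fn := rG n0 - (a n0)%:M.
  have Wk : ((W : 'M_p) <= kermx fn)%MS.
    have [I [Ws isoW defW]] := component_mx_def simM.
    change (component_mx rN (socle_base W) <= kermx fn)%MS; rewrite defW.
    apply/sumsmx_subP => i _; case: (isoW i) => f0 _ homf0 eqf0.
    rewrite -eqf0 (eqmxMr f0 defu) sub_kermx.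
    have homu : (u <= dom_hom_mx rN f0)%MS by rewrite -defu.
    have /hom_mxP/(_ n0 Nn0) /= hE := homu.
    have uE := ua n0 Nn0; rewrite /= in uE.
    by rewrite /fn mulmxBr -hE uE mul_mx_scalar -scalemxAl subrr.
  have : fn = 0 by apply/eqP; rewrite -[fn]mul1mx -sub_kermx (submx_trans Wfull Wk).
  move/eqP; rewrite subr_eq0 => /eqP E.
  have : is_diag_mx (rG n0) by rewrite E scalar_mx_is_diag.
  by rewrite (diag_phi monoG Gn0) -def_m0 (negbTE m0n1).
have ocard : #|orbit 'Cl%act G W| = p by rewrite -orbW cardsT.
have sNC : N \subset 'C_G[W | 'Cl]%g.
  rewrite subsetI sNG /=; apply: subset_trans (joing_subl N 'C_G(N)%g) _.
  apply: subset_trans (Clifford_astab sH) _.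
  by apply: astabS; apply: subsetT.
have := Lagrange_index (subsetIl G _) sNC.
have e2 : #|G : 'C_G[W | 'Cl]|%g = p by rewrite -card_orbit_in ?ocard.
rewrite [X in (X * _)%N]e2 => e.
by move: ndv; rewrite -e dvdn_mulr.
Qed.

End Part2.

Unset Implicit Arguments.

(* A finite subgroup of M(p,C) is given as the image of a faithful
   representation rG of a finite group G into GL(p,C). *)
Theorem theorem2p12 (p : nat) (gT : finGroupType) (G : {group gT})
    (rG : mx_representation Cfield G p) :
  prime p ->
  mx_faithful rG ->
  (forall x, x \in G -> is_monomial (rG x)) ->
  perm_part_transitive rG ->
  (diag_part_nonscalar rG -> mx_irreducible rG) /\
  (solvable G -> mx_irreducible rG -> diag_part_nonscalar rG).
Proof.
move=> pr ff monoG tr; split.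
  exact: (part1 monoG pr tr).
by move=> solG irrG; exact: (part2 monoG pr ff tr solG irrG).
Qed.
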